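(* Let $n\ge 5$. Suppose a group-testing measurement matrix $A$ for $\mathcal{G}^4_n$ distinguishes all binary vectors $x\in\{0,1\}^n$ having at most two ones, meaning that distinct such vectors give distinct outcome vectors. Then $A$ has at least $\lfloor n/4\rfloor$ rows.
   Context: $\mathcal{G}^4_n$ is the graph on $\{1,\dots,n\}$ in which each node $i$ is adjacent to $i\pm1$ and $i\pm2 \pmod n$. A group-testing measurement matrix for a graph $G$ on $\{1,\dots,n\}$ is a matrix $A\in\{0,1\}^{m\times n}$ in which every nonzero row has a support that induces a connected subgraph of $G$. Given $x\in\{0,1\}^n$, the outcome of row $i$ is the Boolean OR $\bigvee_{j:A_{ij}=1}x_j$. *)

(* Defs.v *)
From mathcomp Require Import all_boot all_order all_algebra.
Set Implicit Arguments. Unset Strict Implicit. Unset Printing Implicit Defensive.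

(* Vertices of G^4_n are 'I_n, i.e. 0..n-1 (node i+1 of the paper is i here). *)
Definition g4_adj (n : nat) : rel 'I_n :=
  fun i j => (i != j) &&
    [|| (j == (i + 1) %% n :> nat), (j == (i + 2) %% n :> nat),
        (i == (j + 1) %% n :> nat) | (i == (j + 2) %% n :> nat)].

Definition induces_connected (T : finType) (e : rel T) (S : {set T}) : Prop :=
  forall u v, u \in S -> v \in S ->
    connect [rel a b | [&& a \in S, b \in S & e a b]] u v.

Definition row_support (m n : nat) (A : 'M[bool]_(m, n)) (i : 'I_m) : {set 'I_n} :=
  [set j | A i j].

Definition gt_matrix (m n : nat) (e : rel 'I_n) (A : 'M[bool]_(m, n)) : Prop :=
  forall i : 'I_m, row_support A i != set0 -> induces_connected e (row_support A i).

Definition outcome (m n : nat) (A : 'M[bool]_(m, n)) (x : {ffun 'I_n -> bool})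
  : {ffun 'I_m -> bool} :=
  [ffun i => [exists j, A i j && x j]].

Definition weight (n : nat) (x : {ffun 'I_n -> bool}) : nat := #|[set j | x j]|.

(* Main.v *)
Require Import Defs.
From mathcomp Require Import all_boot all_order all_algebra.
From mathcomp Require Import zify.
Lemma mc x n : 0 < n -> x < 2*n -> (x %% n = x /\ x < n) \/ (x %% n = x - n /\ n <= x).
Proof.
move=> n0 h; case: (ltnP x n) => h2; [left; rewrite modn_small //|right].
split=>//. rewrite -{1}(subnK h2) modnDr modn_small //; lia.
Qed.

Lemma step_d n e A B : 5 <= n -> 2 <= e <= n-2 -> A < n -> B < n ->
  (2 <= A < e \/ e + 2 <= A) -> (2 <= B < e \/ e + 2 <= B) ->
  (B = (A+1)%%n \/ B = (A+2)%%n \/ A = (B+1)%%n \/ A = (B+2)%%n) ->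
  (A < e <-> B < e).
Proof.
move=> n5 he An Bn hA hB.
have n0 : 0 < n by lia.
case=> [h|[h|[h|h]]].
- have := mc (A+1) n n0 ltac:(lia); lia.
- have := mc (A+2) n n0 ltac:(lia); lia.
- have := mc (B+1) n n0 ltac:(lia); lia.
- have := mc (B+2) n n0 ltac:(lia); lia.
Qed.

Lemma dadj n p a b k : 5 <= n -> p < n -> a < n -> k <= 2 -> b = (a+k)%%n ->
  (b + n - p) %% n = ((a + n - p) %% n + k) %% n.
Proof.
move=> n5 pn an hk ->.
rewrite modnDml -addnBA; last lia.
rewrite modnDml; congr (_ %% _); lia.
Qed.

Lemma dinj n p x y : 5 <= n -> p < n -> x < n -> y < n ->
  (x + n - p) %% n = (y + n - p) %% n -> x = y.
Proof.
move=> n5 pn xn yn.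
have n0 : 0 < n by lia.
have := mc (x+n-p) n n0 ltac:(lia).
have := mc (y+n-p) n n0 ltac:(lia).
lia.
Qed.

Lemma dclass n p q v : 5 <= n -> p < n -> q < n -> v < n ->
  2 <= (q + n - p) %% n <= n - 2 ->
  v <> p -> v <> (p+1)%%n -> v <> q -> v <> (q+1)%%n ->
  (2 <= (v+n-p)%%n < (q + n - p) %% n \/ (q + n - p) %% n + 2 <= (v+n-p)%%n).
Proof.
move=> n5 pn qn vn he h1 h2 h3 h4.
have n0 : 0 < n by lia.
have e1 : ((p+1)%%n + n - p) %% n = 1.
  rewrite (@dadj n p p _ 1) // addKn modnn add0n modn_small //; lia.
have e2 : ((q+1)%%n + n - p) %% n = (q + n - p) %% n + 1.
  rewrite (@dadj n p q _ 1) // modn_small //; lia.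
have e0 : (p + n - p) %% n = 0 by rewrite addKn modnn.
have vn' : (v+n-p)%%n < n by rewrite ltn_pmod.
have lt x : x %% n < n by rewrite ltn_pmod.
have a0 : (v+n-p)%%n <> 0 by move=> h; apply: h1; apply: (@dinj n p) => //; rewrite ?lt //; congruence.
have a1 : (v+n-p)%%n <> 1 by move=> h; apply: h2; apply: (@dinj n p) => //; rewrite ?lt //; congruence.
have a2 : (v+n-p)%%n <> (q+n-p)%%n by move=> h; apply: h3; apply: (@dinj n p) => //; rewrite ?lt //; congruence.
have a3 : (v+n-p)%%n <> (q+n-p)%%n + 1 by move=> h; apply: h4; apply: (@dinj n p) => //; rewrite ?lt //; congruence.
lia.
Qed.

Lemma arithT n e : 5 <= n -> e < n -> e <> 0 -> e <> 2 -> (e+1)%%n <> 2 ->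
  (e+2)%%n <> 0 -> (e+2)%%n <> 1 ->
  2 <= e <= n - 2 /\ (2 < e) != ((e+2)%%n < e).
Proof.
move=> n5 en h0 h2 h3 h4 h5.
have n0 : 0 < n by lia.
have := mc (e+1) n n0 ltac:(lia).
have := mc (e+2) n n0 ltac:(lia).
move=> A B.
have [H1 H2] : 3 <= e /\ e <= n - 3 by lia.
split; first lia.
rewrite modn_small; last lia.
apply/negP; move/eqP; lia.
Qed.

Lemma arithF n E X Y : 5 <= n -> E < n -> X < n -> Y < n ->
  (X+1)%%n = 0 -> (Y+1)%%n = E -> X <> E -> X <> (E+1)%%n -> Y <> 0 -> Y <> 1 -> X <> Y ->
  2 <= E <= n - 2 /\ (X < E) != (Y < E).
Proof.
move=> n5 En Xn Yn h1 h2 h3 h4 h5 h6 h7.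
have n0 : 0 < n by lia.
have := mc (X+1) n n0 ltac:(lia).
have := mc (Y+1) n n0 ltac:(lia).
have := mc (E+1) n n0 ltac:(lia).
move=> A B C.
have [H1 H2] : X = n - 1 /\ Y + 1 = E by lia.
split; first lia.
apply/negP; move/eqP; lia.
Qed.

Lemma gap_contra n (S : {set 'I_n}) (p p1 q q1 u w : 'I_n) :
  5 <= n -> induces_connected (@g4_adj n) S ->
  val p1 = (p+1)%%n -> val q1 = (q+1)%%n ->
  p \notin S -> p1 \notin S -> q \notin S -> q1 \notin S -> u \in S -> w \in S ->
  2 <= (q + n - p) %% n <= n - 2 ->
  ((u + n - p) %% n < (q + n - p) %% n) != ((w + n - p) %% n < (q + n - p) %% n) -> False.
Proof.
move=> n5 con hp1 hq1 pS p1S qS q1S uS wS he.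
have := con u w uS wS.
have pn : p < n by [].
have ne (x y : 'I_n) : x \in S -> y \notin S -> (x : nat) <> y.
  by move=> xS yS h; move: xS; rewrite (val_inj h) (negbTE yS).
have cls (v : 'I_n) : v \in S ->
   (2 <= (v+n-p)%%n < (q + n - p) %% n \/ (q + n - p) %% n + 2 <= (v+n-p)%%n).
  move=> vS; apply: dclass => //; [exact: ne|rewrite -hp1; exact: ne|exact: ne|rewrite -hq1; exact: ne].
have lt x : x %% n < n by rewrite ltn_pmod //; lia.
have cl : closed [rel a b | [&& a \in S, b \in S & g4_adj a b]]
   [pred x : 'I_n | (x + n - p) %% n < (q + n - p) %% n].
  move=> a b /= /and3P[aS bS ab].
  have st : ((a + n - p) %% n < (q + n - p) %% n <-> (b + n - p) %% n < (q + n - p) %% n).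
    apply: (@step_d n) => //; [exact: cls|exact: cls|].
    move/andP: ab => [_ /or4P [/eqP h|/eqP h|/eqP h|/eqP h]].
    - by left; apply: (@dadj n p a b 1).
    - by right; left; apply: (@dadj n p a b 2).
    - by right; right; left; apply: (@dadj n p b a 1).
    - by right; right; right; apply: (@dadj n p b a 2).
  by apply/idP/idP => h; apply/st.
move/(closed_connect cl) => /= h.
by move: h; rewrite !inE /= => h; by rewrite h eqxx.
Qed.

Lemma out2 (m n : nat) (A : 'M[bool]_(m, n)) k (a b : 'I_n) :
  outcome A [ffun v => (v == a) || (v == b)] k = A k a || A k b.
Proof.
rewrite /outcome ffunE; apply/existsP/orP.
- by case=> v; rewrite ffunE => /andP[h /orP[]/eqP e]; [left|right]; rewrite -e.
- by case=> h; [exists a|exists b]; rewrite ffunE h eqxx ?orbT.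
Qed.

Lemma shift_neq n j : 5 <= n -> j < n -> (j+1)%%n <> j /\ ((j+1)%%n+1)%%n <> j.
Proof.
move=> n5 jn; have n0 : 0 < n by lia.
have := mc (j+1) n n0 ltac:(lia).
have := ltn_pmod (j+1) n0.
have := mc ((j+1)%%n+1) n n0 ltac:(have := ltn_pmod (j+1) n0; lia).
lia.
Qed.

Lemma Dneq n p (x y : 'I_n) : 5<=n -> p<n -> (x:nat) <> y -> (x+n-p)%%n <> (y+n-p)%%n.
Proof. by move=> n5 pn h e; apply: h; apply: (@dinj n p). Qed.

Lemma D0 n p : (p + n - p) %% n = 0.
Proof. by rewrite addKn modnn. Qed.

Theorem proposition1 (n m : nat) (A : 'M[bool]_(m, n)) :
  5 <= n ->
  gt_matrix (@g4_adj n) A ->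
  (forall x y : {ffun 'I_n -> bool},
      weight x <= 2 -> weight y <= 2 -> x != y -> outcome A x != outcome A y) ->
  n %/ 4 <= m.
Proof.
move=> n5 gt sep.
have n0 : 0 < n by lia.
pose sh (j : 'I_n) (k : nat) : 'I_n := Ordinal (@ltn_pmod (j+k) n n0).
pose D2 (j : 'I_n) : {ffun 'I_n -> bool} := [ffun v => (v == j) || (v == sh j 1)].
pose W (j : 'I_n) (ks : 'I_m * bool) : bool :=
  let k := ks.1 in
  if ks.2 then ~~ A k j && ~~ A k (sh j 1) && A k (sh (sh j 1) 1)
  else A k j && ~~ A k (sh j 1) && ~~ A k (sh (sh j 1) 1).
have wD j : weight (D2 j) <= 2.
  rewrite /weight (_ : [set v | D2 j v] = [set j; sh j 1]); last first.
    by apply/setP => v; rewrite !inE ffunE.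
  by rewrite cards2; case: (_ != _).
have ex j : exists ks, W j ks.
  have hne : D2 j != D2 (sh j 1).
    apply/eqP => h; have := congr1 (fun f : {ffun _ -> bool} => f j) h; rewrite !ffunE eqxx /=.
    have [h1 h2] := @shift_neq n j n5 (ltn_ord j).
    case/esym/orP => /eqP/(congr1 val) /= e; [exact: h1|exact: h2].
  have hs := sep _ _ (wD j) (wD (sh j 1)) hne.
  have /existsP [k hk] : [exists k, outcome A (D2 j) k != outcome A (D2 (sh j 1)) k].
    move: hs; apply: contraR => /existsPn h; rewrite ?negbK; apply/eqP/ffunP => k.
    by apply/eqP; move: (h k); rewrite negbK.
  rewrite !out2 in hk.
  move: hk; case E0: (A k j); case E1: (A k (sh j 1)); case E2: (A k (sh (sh j 1) 1)) => //= _.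
  + by exists (k, false); rewrite /W /= E0 E1 E2.
  + by exists (k, true); rewrite /W /= E0 E1 E2.
have uniq j j' ks : W j ks -> W j' ks -> j = j'.
  case: ks => k s hj hj'; apply/eqP; apply/negPn/negP => hne.
  pose S := row_support A k.
  have mS x : (x \in S) = A k x by rewrite inE.
  have ne (x y : 'I_n) : x \in S -> y \notin S -> (x : nat) <> y.
    by move=> xS yS h; move: xS; rewrite (val_inj h) (negbTE yS).
  have jj : (j : nat) <> j' by move=> h; move/eqP: hne; apply; apply: val_inj.
  have lt x : x %% n < n by rewrite ltn_pmod.
  have m1 : (0+1)%%n = 1 by rewrite modn_small; lia.
  have m2 : (1+1)%%n = 2 by rewrite modn_small; lia.
  have S0 (x : 'I_n) : x \in S -> S != set0 by move=> xS; apply/set0Pn; exists x.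
  have dd (a : 'I_n) p k' : k' <= 2 -> p < n ->
     ((sh a k' : nat) + n - p) %% n = ((a + n - p) %% n + k') %% n.
    by move=> hk pn; apply: dadj.
  case: s hj hj' => [|] /= /andP[/andP[a0 a1] a2] /andP[/andP[b0 b1] b2];
    move: a0 a1 a2 b0 b1 b2 => /= a0 a1 a2 b0 b1 b2; rewrite -mS in a0; rewrite -mS in a1; rewrite -mS in a2; rewrite -mS in b0; rewrite -mS in b1; rewrite -mS in b2.
  - have con := gt k (S0 _ a2 : row_support A k != set0).
    have [rng neq] : 2 <= (j' + n - j) %% n <= n - 2 /\
        (2 < (j' + n - j) %% n) != (((j' + n - j) %% n + 2) %% n < (j' + n - j) %% n).
      apply: (@arithT n _ n5 (lt _)).
      + by rewrite -(D0 n j); apply: Dneq => //; apply: nesym.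
      + move=> e; apply: (@Dneq n _ _ _ n5 (ltn_ord j) (ne _ _ a2 b0)).
        by rewrite dd // dd // D0 m1 m2 e.
      + move=> e; apply: (@Dneq n _ _ _ n5 (ltn_ord j) (ne _ _ a2 b1)).
        by rewrite dd // dd // D0 m1 m2 dd // e.
      + move=> e; apply: (@Dneq n _ _ _ n5 (ltn_ord j) (ne _ _ b2 a0)).
        by rewrite dd // dd // modnDml -addnA -[1+1]/2 e D0.
      + move=> e; apply: (@Dneq n _ _ _ n5 (ltn_ord j) (ne _ _ b2 a1)).
        by rewrite dd // dd // modnDml -addnA -[1+1]/2 e dd // D0 m1.
    apply: (@gap_contra n S j (sh j 1) j' (sh j' 1) (sh (sh j 1) 1) (sh (sh j' 1) 1)) => //.
    by rewrite dd // dd // D0 m1 m2 dd // dd // modnDml -addnA -[1+1]/2.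
  - have con := gt k (S0 _ a0 : row_support A k != set0).
    pose p := sh j 1; pose q := sh j' 1.
    have pn : p < n by [].
    have [rng neq] : 2 <= (q + n - p) %% n <= n - 2 /\
        ((j + n - p) %% n < (q + n - p) %% n) != ((j' + n - p) %% n < (q + n - p) %% n).
      apply: (@arithF n _ _ _ n5 (lt _) (lt _) (lt _)).
      + by rewrite -dd //; exact: D0.
      + by rewrite -dd.
      + exact: (@Dneq n _ _ _ n5 pn (ne _ _ a0 b1)).
      + move=> e; apply: (@Dneq n _ _ _ n5 pn (ne _ _ a0 b2)).
        by rewrite e dd.
      + move=> e; apply: (@Dneq n _ _ _ n5 pn (ne _ _ b0 a1)).
        by rewrite e D0.
      + move=> e; apply: (@Dneq n _ _ _ n5 pn (ne _ _ b0 a2)).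
        by rewrite e dd // D0 m1.
      + exact: Dneq.
    exact: (@gap_contra n S p (sh p 1) q (sh q 1) j j').
pose f (j : 'I_n) := [pick ks | W j ks].
have finj : injective f.
  move=> j j'; rewrite /f.
  case: pickP => [ks h|h]; last by case: (ex j) => ks; rewrite h.
  case: pickP => [ks' h'|h']; last by case: (ex j') => z; rewrite h'.
  by case=> e; subst ks'; exact: uniq h h'.
have := leq_card f finj.
rewrite card_ord card_option card_prod card_ord card_bool => hc.
lia.
Qed.
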